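(* Let $\mathcal A=(\Sigma,Q_\mathcal A,I_\mathcal A,F_\mathcal A,\delta_\mathcal A)$ and $\mathcal B=(\Sigma,Q_\mathcal B,I_\mathcal B,F_\mathcal B,\delta_\mathcal B)$ be NBA and $P=P_{\mathcal A,\mathcal B}(\subseteq^{\mathrm{bw}},\subseteq^{\mathrm f})$. Then $\mathcal L(\mathcal A)\subseteq\mathcal L(\mathcal B)$ if and only if $\mathcal L(\mathrm{Prune}_\mathcal B(\mathcal A,P))\subseteq\mathcal L(\mathcal B)$.
   Context: NBA are forward and backward complete; initial traces start in initial states, fair traces are infinite and visit accepting states infinitely often; the language is the set of infinite words with an initial fair trace. The relations below are on states of the disjoint union of $\mathcal A$ and $\mathcal B$, restricted to $Q_\mathcal A\times Q_\mathcal B$. Backward finite trace inclusion: $p\subseteq^{\mathrm{bw}}q$ iff for every finite word $w$, if there is a finite $w$-trace from an initial state ending in $p$, then there is one from an initial state ending in $q$. Fair trace inclusion: $p\subseteq^{\mathrm f}q$ iff for every infinite word $w$ and infinite $w$-trace from $p$ there is an infinite $w$-trace from $q$ that is fair whenever the former is fair. For $R_b,R_f\subseteq Q_\mathcal A\times Q_\mathcal B$, $P_{\mathcal A,\mathcal B}(R_b,R_f)=\{((p,\sigma,r),(p',\sigma,r'))\in\delta_\mathcal A\times\delta_\mathcal B: p\,R_b\,p',\ r\,R_f\,r'\}$. For $P\subseteq\delta_\mathcal A\times\delta_\mathcal B$, $\mathrm{Prune}_\mathcal B(\mathcal A,P)=(\Sigma,Q_\mathcal A,I_\mathcal A,F_\mathcal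 A,\delta')$ with $\delta'=\{t\in\delta_\mathcal A:\nexists t'\in\delta_\mathcal B,\ (t,t')\in P\}$. *)

(* Defs.v *)
From mathcomp Require Import all_boot.
Set Implicit Arguments. Unset Strict Implicit. Unset Printing Implicit Defensive.

Record nba (Sigma Q : finType) := NBA {
  init  : Q -> Prop;
  acc   : Q -> Prop;
  delta : Q -> Sigma -> Q -> Prop }.

Section Defs.
Variables (Sigma : finType).

Definition forward_complete (Q : finType) (A : nba Sigma Q) : Prop :=
  forall (p : Q) (a : Sigma), exists q, delta A p a q.
Definition backward_complete (Q : finType) (A : nba Sigma Q) : Prop :=
  forall (q : Q) (a : Sigma), exists p, delta A p a q.

Definition is_trace (Q : finType) (A : nba Sigma Q) (w : nat -> Sigma) (rho : nat -> Q) : Prop :=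
  forall i, delta A (rho i) (w i) (rho i.+1).

Definition fair (Q : finType) (A : nba Sigma Q) (rho : nat -> Q) : Prop :=
  forall n, exists m, (n <= m)%N /\ acc A (rho m).

Definition lang (Q : finType) (A : nba Sigma Q) (w : nat -> Sigma) : Prop :=
  exists rho, init A (rho 0) /\ is_trace A w rho /\ fair A rho.

Definition lang_incl (QA QB : finType) (A : nba Sigma QA) (B : nba Sigma QB) : Prop :=
  forall w, lang A w -> lang B w.

(* a finite word of length n is w 0 ... w (n-1); [reach A n w q]: there is a
   finite w-trace from an initial state of A ending in q *)
Definition reach (Q : finType) (A : nba Sigma Q) (n : nat) (w : nat -> Sigma) (q : Q) : Prop :=
  exists rho : nat -> Q, init A (rho 0) /\
    (forall i, (i < n)%N -> delta A (rho i) (w i) (rho i.+1)) /\ rho n = q.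

(* backward finite trace inclusion, restricted to QA × QB *)
Definition bw_incl (QA QB : finType) (A : nba Sigma QA) (B : nba Sigma QB) (p : QA) (q : QB) : Prop :=
  forall n w, reach A n w p -> reach B n w q.

(* fair trace inclusion, restricted to QA × QB *)
Definition fair_incl (QA QB : finType) (A : nba Sigma QA) (B : nba Sigma QB) (p : QA) (q : QB) : Prop :=
  forall w rho, is_trace A w rho -> rho 0 = p ->
    exists rho', is_trace B w rho' /\ rho' 0 = q /\ (fair A rho -> fair B rho').

(* P_{A,B}(Rb, Rf) as a relation on pairs of transitions (p,σ,r), (p',σ',r') *)
Definition P_AB (QA QB : finType) (A : nba Sigma QA) (B : nba Sigma QB)
  (Rb Rf : QA -> QB -> Prop) (p : QA) (s : Sigma) (r : QA) (p' : QB) (s' : Sigma) (r' : QB) : Prop :=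
  delta A p s r /\ delta B p' s' r' /\ s = s' /\ Rb p p' /\ Rf r r'.

Definition prune (QA QB : finType) (A : nba Sigma QA) (B : nba Sigma QB)
  (P : QA -> Sigma -> QA -> QB -> Sigma -> QB -> Prop) : nba Sigma QA :=
  NBA (init A) (acc A)
    (fun p s r => delta A p s r /\
       ~ (exists p' s' r', delta B p' s' r' /\ P p s r p' s' r')).
End Defs.

(* Main.v *)
Require Import Defs.
From mathcomp Require Import all_boot.
From mathcomp Require Import zify.
From Stdlib Require Import Classical.

Theorem theorem8p3 (Sigma QA QB : finType) (A : nba Sigma QA) (B : nba Sigma QB)
  (hAf : forward_complete A) (hAb : backward_complete A)
  (hBf : forward_complete B) (hBb : backward_complete B) :
  let P := P_AB A B (bw_incl A B) (fair_incl A B) in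
  lang_incl A B <-> lang_incl (prune A B P) B.
Proof.
move=> P; split.
  move=> H w [rho [Hi [Ht Hf]]]; apply: H; exists rho; split=> //; split=> //.
  by move=> i; case: (Ht i).
move=> H w [rho [Hi [Ht Hf]]].
case: (classic (exists i, exists p' s' r', delta B p' s' r' /\
         P (rho i) (w i) (rho i.+1) p' s' r')); last first.
  move=> Hn; apply: H; exists rho; split=> //; split=> // i; split; first exact: Ht.
  by move=> Hc; apply: Hn; exists i.
move=> [i [p' [s' [r' [_ [_ [HB [Es [Hbw Hfi]]]]]]]]].
subst s'.
have Hr : reach A i w (rho i).
  by exists rho; split=> //; split=> // k _; apply: Ht.
have [rB [HB0 [HBt HBi]]] := Hbw i w Hr.
pose w' := fun k => w (k + i.+1).
pose rA := fun k => rho (k + i.+1).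
have HtA : is_trace A w' rA.
  by move=> k; rewrite /w' /rA; have := Ht (k + i.+1); rewrite addSn.
have [rB' [HtB' [HB'0 HfB']]] := Hfi w' rA HtA erefl.
have HfA : fair A rA.
  move=> n; have [m [Hm Ha]] := Hf (n + i.+1).
  exists (m - i.+1); split; first lia.
  by rewrite /rA subnK //; lia.
have {}HfB' := HfB' HfA.
exists (fun k => if (k <= i)%N then rB k else rB' (k - i.+1)).
split; first by rewrite leq0n.
split.
  move=> k.
  case: (ltngtP k i) => Hk.
  - exact: HBt.

    have := HtB' (k - i.+1); rewrite /w' subnK // => E.
    have -> : (k.+1 - i.+1 = (k - i.+1).+1)%N by lia.
    exact: E.
  - subst k; rewrite subnn HB'0 HBi; exact: HB.
move=> n; have [m [Hm Ha]] := HfB' n.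
exists (m + i.+1); split; first lia.
have -> : (m + i.+1 <= i)%N = false by lia.
by rewrite addnK.
Qed.
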